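(* Let $U,V\in U(2^n)$ satisfy $D(U,V)\le\epsilon$. Then for every $P\in\mathcal{P}_n$, $$D(UPU^T, VPV^T)\le 2\epsilon,$$ where the transpose is taken in the computational basis.
   Context: For $d\times d$ unitaries ($d=2^n$), $D(U_1,U_2)=\frac{1}{\sqrt{2d^2}}\|U_1\otimes U_1^*-U_2\otimes U_2^*\|_2$ with $\|A\|_2=\sqrt{\mathrm{Tr}[A^\dagger A]}$ the Frobenius norm; equivalently $D(U_1,U_2)=\sqrt{1-\frac{1}{d^2}|\mathrm{Tr}[U_1U_2^\dagger]|^2}$. $\mathcal{P}_n$ is the $n$-qubit Pauli group, consisting of $i^k P_1\otimes\cdots\otimes P_n$ with $P_j\in\{I,X,Y,Z\}$, $k\in\{0,1,2,3\}$. *)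

(* Defs.v *)
From HB Require Import structures.
From mathcomp Require Import all_boot all_order all_algebra.
From mathcomp Require Import complex mxtens.
Set Implicit Arguments. Unset Strict Implicit. Unset Printing Implicit Defensive.
Import Order.TTheory GRing.Theory Num.Theory.
Local Open Scope ring_scope.

Section Quantum.
Variable R : rcfType.
Local Notation C := (R[i]).

Definition adj m n (A : 'M[C]_(m, n)) : 'M[C]_(n, m) := (map_mx Num.conj A)^T.

Definition unitary d (U : 'M[C]_d) : Prop := U *m adj U = 1%:M.

Definition Ddist d (U1 U2 : 'M[C]_d) : R :=
  Num.sqrt (1 - (Normc.normc (\tr (U1 *m adj U2))) ^+ 2 / (d%:R) ^+ 2).

Inductive pauli1 := PI | PX | PY | PZ.

Definition imag : C := Complex 0 1.

Definition pauli1_mx (p : pauli1) : 'M[C]_2 :=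
  \matrix_(i < 2, j < 2)
    match p with
    | PI => if i == j then 1 else 0
    | PX => if i == j then 0 else 1
    | PY => if i == j then 0 else (if (i : nat) == 0%N then - imag else imag)
    | PZ => if i == j then (if (i : nat) == 0%N then 1 else -1) else 0
    end.

(* tensor product P_1 (x) ... (x) P_n (first n letters of s) *)
Fixpoint pauli_string (n : nat) (s : seq pauli1) : 'M[C]_(2 ^ n) :=
  match n with
  | 0 => 1%:M
  | n'.+1 => castmx (esym (expnS 2 n'), esym (expnS 2 n'))
               (tensmx (pauli1_mx (head PI s)) (pauli_string n' (behead s)))
  end.

Definition in_pauli_group n (P : 'M[C]_(2 ^ n)) : Prop :=
  exists (k : 'I_4) (s : n.-tuple pauli1), P = imag ^+ k *: pauli_string n s.

End Quantum.

(* Main.v *)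
Require Import Defs.
From HB Require Import structures.
From mathcomp Require Import all_boot all_order all_algebra.
From mathcomp Require Import complex mxtens.
From mathcomp Require Import ring lra.
Import Order.TTheory GRing.Theory Num.Theory.
Local Open Scope ring_scope.

Set Implicit Arguments. Unset Strict Implicit.
Section Aux.
Context {R : rcfType}.
Local Notation C := (R[i]).

Lemma hadjM m n p (A : 'M[C]_(m, n)) (B : 'M[C]_(n, p)) :
  adj (A *m B) = adj B *m adj A.
Proof. by rewrite /adj map_mxM trmx_mul. Qed.

Lemma hadjK m n (A : 'M[C]_(m, n)) : adj (adj A) = A.
Proof. by apply/matrixP => i j; rewrite !mxE conjCK. Qed.

Lemma hadjD m n (A B : 'M[C]_(m, n)) : adj (A + B) = adj A + adj B.
Proof. by apply/matrixP => i j; rewrite !mxE rmorphD. Qed.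

Lemma hadjN m n (A : 'M[C]_(m, n)) : adj (- A) = - adj A.
Proof. by apply/matrixP => i j; rewrite !mxE rmorphN. Qed.

Lemma hadjZ m n c (A : 'M[C]_(m, n)) : adj (c *: A) = c^* *: adj A.
Proof. by apply/matrixP => i j; rewrite !mxE rmorphM. Qed.

Lemma hadj1 m : adj (1%:M : 'M[C]_m) = 1%:M.
Proof. apply/matrixP => i j; by rewrite !mxE rmorph_nat eq_sym. Qed.

Lemma hadjT m n (A : 'M[C]_(m, n)) : adj (A^T) = (adj A)^T.
Proof. by apply/matrixP => i j; rewrite !mxE. Qed.

Lemma tr_adj m (A : 'M[C]_m) : \tr (adj A) = (\tr A)^*.
Proof. by rewrite /adj mxtrace_tr trace_map_mx. Qed.

Lemma tr_AadjA_ge0 m n (A : 'M[C]_(m, n)) : 0 <= \tr (A *m adj A).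
Proof.
rewrite /mxtrace; apply: sumr_ge0 => i _; rewrite mxE.
by apply: sumr_ge0 => j _; rewrite !mxE; exact: mul_conjC_ge0.
Qed.

Lemma unitaryC m (A : 'M[C]_m) : A *m adj A = 1%:M -> adj A *m A = 1%:M.
Proof. exact: mulmx1C. Qed.

Lemma castmx_unitary m m' (e : m = m') (A : 'M[C]_m) :
  A *m adj A = 1%:M -> castmx (e, e) A *m adj (castmx (e, e) A) = 1%:M.
Proof. by case: m' / e; rewrite castmx_id. Qed.

Lemma tens11 m n : (1%:M : 'M[C]_m) *t (1%:M : 'M[C]_n) = 1%:M.
Proof.
apply/matrixP => i j.
case: (mxtens_indexP i) => i0 i1; case: (mxtens_indexP j) => j0 j1.
rewrite tensmxE !mxE (inj_eq (can_inj (@mxtens_indexK _ _))) xpair_eqE.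
by case: (i0 == j0); case: (i1 == j1); rewrite ?mul1r ?mul0r.
Qed.

Lemma tens_unitary m n (A : 'M[C]_m) (B : 'M[C]_n) :
  A *m adj A = 1%:M -> B *m adj B = 1%:M -> (A *t B) *m adj (A *t B) = 1%:M.
Proof.
move=> hA hB; rewrite /adj map_mxT trmx_tens.
by rewrite tensmx_mul -/(adj A) -/(adj B) hA hB tens11.
Qed.

Lemma imagC : imag R * (imag R)^* = 1 :> C.
Proof. rewrite -normCK /imag sqr_normc; apply/eqP; by rewrite eq_complex /= !(mul0r, mulr0, mul1r, mulrN1, opprK, add0r, addr0, subr0, sub0r) !eqxx. Qed.

Lemma pauli1_unitary p : pauli1_mx R p *m adj (pauli1_mx R p) = 1%:M.
Proof.
apply/matrixP => i j; rewrite !mxE !big_ord_recl big_ord0 /= !mxE.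
case: p; case: i => [[|[|//]] hi]; case: j => [[|[|//]] hj] /=;
  rewrite ?(rmorph0, rmorph1, rmorphN, mulr0, mul0r, mulr1, mul1r, add0r, addr0, mulrNN, imagC) //.
Qed.

Lemma pauli_string_unitary n s :
  pauli_string R n s *m adj (pauli_string R n s) = 1%:M.
Proof.
elim: n s => [|n IH] s /=; first by rewrite hadj1 mulmx1.
apply: castmx_unitary; apply: tens_unitary; [exact: pauli1_unitary | exact: IH].
Qed.

Lemma pauli_unitary n (P : 'M[C]_(2 ^ n)) : in_pauli_group P -> P *m adj P = 1%:M.
Proof.
case=> k [s ->]; rewrite hadjZ -scalemxAl -scalemxAr scalerA pauli_string_unitary.
by rewrite rmorphXn -exprMn imagC expr1n scale1r.
Qed.
End Aux.

Section Aux2.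
Variable R : rcfType.
Local Notation C := (R[i]).

Lemma hadj_scalar m (c : C) : adj (c%:M : 'M[C]_m) = (c^*)%:M.
Proof. by apply/matrixP => i j; rewrite !mxE rmorphMn eq_sym. Qed.

Lemma key d (X Y : 'M[C]_d) : X *m adj X = 1%:M -> Y *m adj Y = 1%:M ->
  (\tr X)^* = \tr X -> \tr Y = \tr X ->
  8 * \tr X - 6 * d%:R <= \tr (X *m Y) + (\tr (X *m Y))^*.
Proof.
move=> hX hY hXr hYX.
have hY' := unitaryC hY.
pose M := X + adj Y - (2%:R : C) *: 1%:M.
have H := tr_AadjA_ge0 M.
have E : \tr (M *m adj M) = (\tr (X *m Y) + (\tr (X *m Y))^*) - (8 * \tr X - 6 * d%:R).
  rewrite /M !hadjD hadjN hadjK hadjZ hadj1 conjC_nat.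
  rewrite !mulmxDl !mulmxDr ?mulmxN ?mulNmx ?mulmxDr ?mulmxN.
  rewrite -!scalemxAl -!scalemxAr !mulmx1 !mul1mx hX hY' -hadjM.
  rewrite !raddfD !raddfN /= !mxtraceZ !mxtrace1 !tr_adj hYX hXr.
  ring.
by rewrite -subr_ge0 -E.
Qed.
End Aux2.

Section Aux3.
Context {R : rcfType}.

Lemma normC_normc (x : R[i]) : `|x| = ((Normc.normc x)%:C)%C.
Proof. by case: x. Qed.

Lemma final_real (na nb dd : R) : 0 < dd -> 0 <= na -> 0 <= nb ->
  8 * na - 6 * dd <= 2 * nb ->
  Num.sqrt (1 - nb ^+ 2 / dd ^+ 2) <= 2 * Num.sqrt (1 - na ^+ 2 / dd ^+ 2).
Proof.
move=> hd ha hb h.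
have h1 : dd ^+ 2 - nb ^+ 2 <= 4 * (dd ^+ 2 - na ^+ 2).
  have [c|c] := lerP (4 * na) (3 * dd).
    have : (4 * na) * (4 * na) <= (3 * dd) * (3 * dd) by apply: ler_pM => //; lra.
    have : 0 <= nb * nb by apply: mulr_ge0.
    rewrite !expr2; nra.
  have : (4 * na - 3 * dd) * (4 * na - 3 * dd) <= nb * nb.
    by apply: ler_pM => //; lra.
  have : 0 <= (na - dd) * (na - dd) by rewrite -expr2 sqr_ge0.
  rewrite !expr2; nra.
have hd2 : 0 < dd ^+ 2 by rewrite exprn_gt0.
have h2 : 1 - nb ^+ 2 / dd ^+ 2 <= 4 * (1 - na ^+ 2 / dd ^+ 2).
  have -> : 1 - nb ^+ 2 / dd ^+ 2 = (dd ^+ 2 - nb ^+ 2) / dd ^+ 2.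
    by field; rewrite gt_eqF.
  have -> : 4 * (1 - na ^+ 2 / dd ^+ 2) = 4 * (dd ^+ 2 - na ^+ 2) / dd ^+ 2.
    by field; rewrite gt_eqF.
  by apply: ler_wpM2r => //; rewrite invr_ge0 ltW.
apply: (le_trans (ler_wsqrtr h2)).
rewrite sqrtrM; last by lra.
have -> : (4 : R) = 2 ^+ 2 by rewrite expr2; lra.
by rewrite sqrtr_sqr ger0_norm.
Qed.
End Aux3.

Unset Implicit Arguments. Set Strict Implicit.

Theorem lemma7 (R : rcfType) (n : nat) (U V : 'M[R[i]]_(2 ^ n)) (eps : R) :
  unitary U -> unitary V -> Ddist U V <= eps ->
  forall P : 'M[R[i]]_(2 ^ n), in_pauli_group P ->
  Ddist (U *m P *m U^T) (V *m P *m V^T) <= 2 * eps.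
Proof.
rewrite /unitary => hU hV hD P hP.
have hP' := pauli_unitary hP.
have hPa := unitaryC hP'.
pose W := adj V *m U.
have eW : W = adj V *m U by [].
clearbody W.
have hW : W *m adj W = 1%:M.
  by rewrite eW hadjM hadjK mulmxA -(mulmxA (adj V)) hU mulmx1 unitaryC.
have hWa := unitaryC hW.
pose WT := P *m W^T *m adj P.
have eWT : WT = P *m W^T *m adj P by [].
clearbody WT.
have hWTa : adj WT = P *m (adj W)^T *m adj P.
  by rewrite eWT !hadjM hadjK hadjT mulmxA.
have hWT : WT *m adj WT = 1%:M.
  rewrite hWTa eWT !mulmxA -(mulmxA _ (adj P) P) hPa mulmx1.
  by rewrite -(mulmxA P) -trmx_mul hWa trmx1 mulmx1 hP'.
pose a := \tr (U *m adj V).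
have trW : \tr W = a by rewrite eW mxtrace_mulC.
have trWT : \tr WT = a.
  by rewrite eWT mxtrace_mulC mulmxA hPa mul1mx mxtrace_tr.
pose b := \tr (U *m P *m U^T *m adj (V *m P *m V^T)).
have hb : b = \tr (W *m WT).
  rewrite /b eWT eW !hadjM hadjT trmx_mul !mulmxA.
  by rewrite mxtrace_mulC !mulmxA.
pose z : R[i] := if a == 0 then 1 else `|a| / a.
have hz1 : z * z^* = 1.
  rewrite /z; case: eqP => [_|/eqP ha]; first by rewrite rmorph1 mulr1.
  by rewrite -normCK normf_div normr_id divff ?expr1n // normr_eq0.
have hza : z * a = `|a|.
  rewrite /z; case: eqP => [->|/eqP ha]; first by rewrite mulr0 normr0.
  by rewrite divfK.
have hX : (z *: W) *m adj (z *: W) = 1%:M.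
  by rewrite hadjZ -scalemxAl -scalemxAr scalerA hW hz1 scale1r.
have hY : (z *: WT) *m adj (z *: WT) = 1%:M.
  by rewrite hadjZ -scalemxAl -scalemxAr scalerA hWT hz1 scale1r.
have trX : \tr (z *: W) = `|a| by rewrite mxtraceZ trW hza.
have trY : \tr (z *: WT) = \tr (z *: W) by rewrite !mxtraceZ trW trWT.
have trXr : (\tr (z *: W))^* = \tr (z *: W) by rewrite trX geC0_conj.
have K := key hX hY trXr trY.
have hXY : \tr ((z *: W) *m (z *: WT)) = z * z * b.
  by rewrite -scalemxAl -scalemxAr !mxtraceZ hb mulrA.
rewrite hXY trX in K.
have hzn : `|z| = 1.
  by apply/eqP; rewrite -(@pexpr_eq1 _ _ 2) // normCK hz1.
have hnb : `|z * z * b| = `|b| by rewrite !normrM hzn !mul1r.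
have K2 : 8 * `|a| - 6 * (2 ^ n)%:R <= 2 * `|b|.
  apply: (le_trans K).
  have -> : z * z * b + (z * z * b)^* = 2 * 'Re (z * z * b).
    by rewrite ReE; field.
  rewrite -hnb ler_pM2l ?ltr0n //.
  exact: (leif_Re_Creal _).1.
have K3 : 8 * Normc.normc a - 6 * (2 ^ n)%:R <= 2 * Normc.normc b :> R.
  rewrite -(@lecR R) rmorphB !rmorphM /= !rmorph_nat -!normC_normc.
  exact: K2.
have na0 : 0 <= Normc.normc a by case: (a) => x y; apply: sqrtr_ge0.
have nb0 : 0 <= Normc.normc b by case: (b) => x y; apply: sqrtr_ge0.
have d0 : 0 < (2 ^ n)%:R :> R by rewrite ltr0n expn_gt0.
rewrite /Ddist -/b.
apply: (le_trans (final_real d0 na0 nb0 K3)).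
by rewrite ler_pM2l.
Qed.
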